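(* Let $X$ be a finite-dimensional real normed space, $\mathcal M=\{M_1,\dots,M_n\}\subset\mathcal P^f_{\mathrm{Cl}}(X)$, $\Sigma(\mathcal M)\ne\emptyset$ and $d\in\Omega(\mathcal M)$. Then every $K\in\Sigma_d(\mathcal M)$ contains (as a subset) at least one element of $\Sigma_d(\mathcal M)$ that is minimal with respect to inclusion in $\Sigma_d(\mathcal M)$.
   Context: For a metric space $X$, $p\in X$, $A\subset X$: $|p\,A|=\inf_{a\in A}|p\,a|$ ($=\infty$ if $A=\emptyset$); for $0\le r<\infty$, $B_r(A)=\{p:|p\,A|\le r\}$. For nonempty $A,B$, $d_H(A,B)=\max\{\sup_{a\in A}|a\,B|,\sup_{b\in B}|b\,A|\}\in[0,\infty]$. $\mathcal P_{\mathrm{Cl}}(X)$ is the set of nonempty closed subsets of $X$ with $d_H$. A finiteness class of $\mathcal P_{\mathrm{Cl}}(X)$ is an equivalence class of the relation $A\sim B\iff d_H(A,B)<\infty$; $\mathcal P^f_{\mathrm{Cl}}(X)$ denotes a fixed finiteness class. For finite $\mathcal M=\{M_1,\dots,M_n\}\subset\mathcal P^f_{\mathrm{Cl}}(X)$, set $S_{\mathcal M}(Y)=\sum_{i=1}^n d_H(Y,M_i)$ for $Y\in\mathcal P^f_{\mathrm{Cl}}(X)$; $\Sigma(\mathcal M)$ is the set of all minimizers of $S_{\mathcal M}$ over $\mathcal P^f_{\mathrm{Cl}}(X)$. For $K\in\Sigma(\mathcal M)$, $d(K)=(d_H(K,M_1),\dots,d_H(K,M_n))$; $\Omega(\mathcal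 M)=\{d(K):K\in\Sigma(\mathcal M)\}$; for $d=(d_1,\dots,d_n)\in\Omega(\mathcal M)$, $\Sigma_d(\mathcal M)=\{K\in\Sigma(\mathcal M):d(K)=d\}$, partially ordered by inclusion. *)

(* Defs.v *)
From HB Require Import structures.
From mathcomp Require Import all_boot all_order all_algebra.
From mathcomp Require Import all_classical all_reals all_analysis.
Set Implicit Arguments. Unset Strict Implicit. Unset Printing Implicit Defensive.
Import Order.TTheory GRing.Theory Num.Theory.
Import numFieldNormedType.Exports.
Local Open Scope classical_set_scope.
Local Open Scope ring_scope.

Definition finite_dim (R : realType) (V : normedModType R) : Prop :=
  exists (m : nat) (e : 'I_m -> V),
    forall x : V, exists c : 'I_m -> R, x = \sum_(i < m) c i *: e i.

(* |p A| = inf_{a in A} |p a|, equal to +oo when A is empty *)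
Definition dist_pt (R : realType) (V : normedModType R) (p : V) (A : set V) : \bar R :=
  ereal_inf [set (`|p - a|)%:E | a in A].

Definition hausdorff (R : realType) (V : normedModType R) (A B : set V) : \bar R :=
  maxe (ereal_sup [set dist_pt a B | a in A]) (ereal_sup [set dist_pt b A | b in B]).

Definition fin_class (R : realType) (V : normedModType R) (A0 : set V) : set (set V) :=
  [set B | closed B /\ B !=set0 /\ (hausdorff B A0 < +oo)%E].

Definition S_M (R : realType) (V : normedModType R) (n : nat) (M : 'I_n -> set V)
  (Y : set V) : \bar R := (\sum_(i < n) hausdorff Y (M i))%E.

Definition Sigma (R : realType) (V : normedModType R) (A0 : set V) (n : nat)
  (M : 'I_n -> set V) : set (set V) :=
  [set K | fin_class A0 K /\ forall Y, fin_class A0 Y -> (S_M M K <= S_M M Y)%E].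

Definition dvec (R : realType) (V : normedModType R) (n : nat) (M : 'I_n -> set V)
  (K : set V) : 'I_n -> \bar R := fun i => hausdorff K (M i).

Definition Omega (R : realType) (V : normedModType R) (A0 : set V) (n : nat)
  (M : 'I_n -> set V) : set ('I_n -> \bar R) :=
  [set d | exists K, Sigma A0 M K /\ dvec M K = d].

Definition Sigma_d (R : realType) (V : normedModType R) (A0 : set V) (n : nat)
  (M : 'I_n -> set V) (d : 'I_n -> \bar R) : set (set V) :=
  [set K | Sigma A0 M K /\ dvec M K = d].

(* Main.v *)
Require Import Defs.
From HB Require Import structures.
From mathcomp Require Import all_boot all_order all_algebra.
From mathcomp Require Import all_classical all_reals all_analysis.
Import Order.TTheory GRing.Theory Num.Theory.
Import numFieldNormedType.Exports.
Local Open Scope classical_set_scope.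
Local Open Scope ring_scope.
Set Implicit Arguments. Unset Strict Implicit.

Section Dist.
Variables (R : realType) (V : normedModType R).
Implicit Types (A B C : set V) (p a b : V).

Lemma dist_le_pt p A a : A a -> (dist_pt p A <= (`|p - a|)%:E)%E.
Proof. by move=> Aa; apply: ereal_inf_lbound; exists a. Qed.

Lemma dist_ge0 p A : (0 <= dist_pt p A)%E.
Proof. by apply: le_ereal_inf_tmp => _ [a _ <-]; rewrite lee_fin. Qed.

Lemma dist_leP p A (r : R) : (dist_pt p A <= r%:E)%E ->
  forall e, 0 < e -> exists a, A a /\ `|p - a| < r + e.
Proof.
move=> h e e0.
have : (dist_pt p A < (r + e)%:E)%E.
  by apply: le_lt_trans h _; rewrite lte_fin ltrDl.
move=> /ereal_inf_lt [_ [a Aa <-]]; rewrite lte_fin => ?; by exists a.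
Qed.

Lemma dist_le_from p A (r : R) :
  (forall e, 0 < e -> exists a, A a /\ `|p - a| <= r + e) ->
  (dist_pt p A <= r%:E)%E.
Proof.
move=> h; apply/lee_addgt0Pr => e e0; have [a [Aa pa]] := h e e0.
by apply: le_trans (dist_le_pt p Aa) _; rewrite -EFinD lee_fin.
Qed.

Lemma dist_tri a B C (r s : R) : (dist_pt a B <= r%:E)%E ->
  (forall b, B b -> (dist_pt b C <= s%:E)%E) ->
  (dist_pt a C <= (r + s)%:E)%E.
Proof.
move=> hab hbc; apply: dist_le_from => e e0.
have e20 : 0 < e / 2 by rewrite divr_gt0.
have [b [Bb ab]] := dist_leP hab e20.
have [c [Cc bc]] := dist_leP (hbc b Bb) e20.
exists c; split => //.
have -> : a - c = (a - b) + (b - c) by rewrite addrA subrK.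
apply: le_trans (ler_normD _ _) _.
have -> : r + s + e = (r + e / 2) + (s + e / 2) by rewrite addrACA -splitr.
by apply: ltW; apply: ltrD.
Qed.

Lemma haus_le A B x : (forall a, A a -> (dist_pt a B <= x)%E) ->
  (forall b, B b -> (dist_pt b A <= x)%E) -> (hausdorff A B <= x)%E.
Proof.
move=> h1 h2; rewrite /hausdorff ge_max; apply/andP; split;
  apply: ge_ereal_sup => _ [y Ay <-]; by [apply: h1|apply: h2].
Qed.

Lemma haus_dist1 A B a : A a -> (dist_pt a B <= hausdorff A B)%E.
Proof.
move=> Aa; rewrite /hausdorff le_max; apply/orP; left.
by apply: ereal_sup_ubound; exists a.
Qed.

Lemma haus_dist2 A B b : B b -> (dist_pt b A <= hausdorff A B)%E.
Proof.
move=> Bb; rewrite /hausdorff le_max; apply/orP; right.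
by apply: ereal_sup_ubound; exists b.
Qed.

Lemma hausC A B : hausdorff A B = hausdorff B A.
Proof. by rewrite /hausdorff maxC. Qed.

Lemma haus_ge0 A B : A !=set0 -> (0 <= hausdorff A B)%E.
Proof. by move=> [a Aa]; apply: le_trans (haus_dist1 B Aa); apply: dist_ge0. Qed.

Lemma haus_tri A B C (r s : R) : (hausdorff A B <= r%:E)%E ->
  (hausdorff B C <= s%:E)%E -> (hausdorff A C <= (r + s)%:E)%E.
Proof.
move=> hAB hBC; apply: haus_le => [a Aa|c Cc].
  apply: (@dist_tri a B C r s).
    exact: le_trans (haus_dist1 B Aa) hAB.
  by move=> b Bb; apply: le_trans (haus_dist1 C Bb) hBC.
rewrite addrC; apply: (@dist_tri c B A s r).
  exact: le_trans (haus_dist2 B Cc) hBC.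
by move=> b Bb; apply: le_trans (haus_dist2 A Bb) hAB.
Qed.

Lemma haus_real A B : A !=set0 -> (hausdorff A B < +oo)%E ->
  hausdorff A B = (fine (hausdorff A B))%:E.
Proof.
move=> A0 hlt; rewrite fineK //; rewrite ge0_fin_numE //; exact: haus_ge0.
Qed.

End Dist.
Section FD.
Variables (R : realType) (V : normedModType R).

Definition spans m (e : 'I_m -> V) :=
  forall x : V, exists c : 'I_m -> R, x = \sum_(i < m) c i *: e i.

Lemma indep_min m (e : 'I_m -> V) : spans e ->
  (forall k (e' : 'I_k -> V), spans e' -> (m <= k)%N) ->
  forall c : 'I_m -> R, \sum_(i < m) c i *: e i = 0 -> forall j, c j = 0.
Proof.
move=> se mmin c c0 j; apply/eqP/negP => /negP cj0.
revert e se mmin c c0 j cj0; case: m => [|m'] e se mmin c c0 j cj0; first by case: j cj0.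
pose e' := fun k : 'I_m' => e (lift j k).
suff : spans e' by move=> /mmin; rewrite ltnn.
move=> x; have [c' ->] := se x.
exists (fun k => c' (lift j k) - c' j / c j * c (lift j k)).
move: c0; rewrite (bigD1_ord j) //= => c0.
rewrite (bigD1_ord j) //=.
set S0 := \sum_(i < m') c (lift j i) *: e (lift j i) in c0.
have ej : c j *: e j = - S0 by apply/eqP; rewrite -addr_eq0 c0.
have -> : c' j *: e j = (c' j / c j) *: (c j *: e j) by rewrite scalerA mulfVK.
rewrite ej scalerN.
under [X in _ = X]eq_bigr do rewrite scalerBl -scalerA.
by rewrite sumrB -scaler_sumr addrC.
Qed.

Lemma fd_basis : finite_dim V -> exists m (e : 'I_m -> V), spans e /\
  forall c : 'I_m -> R, \sum_(i < m) c i *: e i = 0 -> forall j, c j = 0.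
Proof.
move=> [m0 [e0 h0]].
pose P := fun m => `[< exists e : 'I_m -> V, spans e >].
have exP : exists m, P m by exists m0; apply/asboolP; exists e0.
case: (ex_minnP exP) => m /asboolP [e se] mmin.
exists m, e; split => //; apply: indep_min se _ => k e' se'.
by apply: mmin; apply/asboolP; exists e'.
Qed.

Definition Lm m (e : 'I_m -> V) (c : 'rV[R]_m) : V := \sum_(i < m) c ord0 i *: e i.

Lemma Lm_cont m (e : 'I_m -> V) : continuous (Lm e).
Proof.
have h : forall s : seq 'I_m,
    continuous (fun c : 'rV[R]_m => \sum_(i <- s) c ord0 i *: e i).
  elim=> [|a s IH] x /=.
    under eq_fun do rewrite big_nil. exact: cst_continuous.
  under eq_fun do rewrite big_cons.
  apply: (@continuousD _ _ _ (fun c : 'rV[R]_m => c ord0 a *: e a)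
     (fun c => \sum_(i <- s) c ord0 i *: e i)); last exact: IH.
  by apply: continuousZr_tmp; exact: coord_continuous.
exact: h.
Qed.

Lemma LmZ m (e : 'I_m -> V) k c : Lm e (k *: c) = k *: Lm e c.
Proof. by rewrite /Lm scaler_sumr; apply: eq_bigr => i _; rewrite mxE scalerA. Qed.

Lemma Lm_lower m (e : 'I_m -> V) :
  (forall c : 'I_m -> R, \sum_(i < m) c i *: e i = 0 -> forall j, c j = 0) ->
  exists2 d, 0 < d & forall c, d * `|c| <= `|Lm e c|.
Proof.
move=> ie.
have inj0 c : Lm e c = 0 -> c = 0.
  move=> h; apply/matrixP => i j; rewrite (ord1 i) mxE; exact: ie h j.
pose S := [set c : 'rV[R]_m | `|c| = 1].
have [S0|S0] := pselect (S !=set0); last first.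
  exists 1 => // c; suff -> : c = 0 by rewrite normr0 mulr0.
  apply/eqP/negP => /negP cn0; apply: S0; exists (`|c|^-1 *: c).
  by rewrite /S /= normrZ normfV normr_id mulVf // normr_eq0.
have cS : compact S.
  apply: bounded_closed_compact.
    exists 1; split; first exact: num_real.
    by move=> y y1 c /= ->; rewrite ltW.
  have -> : S = Num.norm @^-1` [set x : R | x <= 1] `&` Num.norm @^-1` [set x : R | 1 <= x].
    apply/seteqP; split => [c /= ->|c /= [h1 h2]]; first by rewrite lexx.
    by apply/eqP; rewrite eq_le h1 h2.
  apply: closedI; apply: (continuous_closedP _).1; (exact: norm_continuous) ||
   (exact: closed_le) || exact: closed_ge.
have cL : {within S, continuous (fun c => `|Lm e c|)}.
  apply: continuous_subspaceT => x.
  apply: (@continuous_comp _ _ _ (Lm e) Num.norm); [exact: Lm_cont|exact: norm_continuous].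
have [c0 c0S c0min] := EVT_min_rV S0 cS cL.
exists `|Lm e c0|.
  rewrite normr_gt0; apply/eqP => /inj0 c00; move: c0S.
  by rewrite inE /S /= c00 normr0 => /esym/eqP; rewrite oner_eq0.
move=> c; have [->|cn0] := eqVneq c 0; first by rewrite normr0 mulr0.
have := c0min (`|c|^-1 *: c).
rewrite inE /S /= normrZ normfV normr_id mulVf ?normr_eq0 // => /(_ erefl).
rewrite LmZ normrZ normfV normr_id => h.
have := ler_wpM2r (normr_ge0 c) h; rewrite mulrAC mulVf ?mul1r // normr_eq0. exact: cn0.
Qed.

Lemma fd_compact : finite_dim V -> forall A : set V, closed A ->
  (exists r, forall a, A a -> `|a| <= r) -> compact A.
Proof.
move=> hV A cA [r hr].
have [m [e [se ie]]] := fd_basis hV.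
have [d d0 hd] := Lm_lower ie.
have -> : A = Lm e @` (Lm e @^-1` A).
  apply/seteqP; split => [x Ax|_ [c Ac <-] //].
  have [c cx] := se x; exists (\row_i c i) => /=; rewrite /Lm.
    by under eq_bigr do rewrite mxE; rewrite -cx.
  by under eq_bigr do rewrite mxE; rewrite -cx.
apply: continuous_compact; first exact: continuous_subspaceT (@Lm_cont m e).
apply: bounded_closed_compact; last first.
  by apply: (continuous_closedP _).1 => //; exact: Lm_cont.
exists (r / d); split; first exact: num_real.
move=> y ry c /= Ac; apply: ltW; apply: le_lt_trans ry.
rewrite ler_pdivlMr // mulrC; apply: le_trans (hd c) _; exact: hr.
Qed.

End FD.

Section Chain.
Variables (R : realType) (V : normedModType R).

Lemma closed_nball (b : V) (s : R) : 0 < s -> closed [set y | `|b - y| <= s].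
Proof. move=> s0; have := @closed_ball_closed _ _ b s; by rewrite closed_ballE. Qed.

Lemma chain_point (hV : finite_dim V) (C : set (set V)) (b : V) (r : R) :
  0 <= r -> C !=set0 -> total_on C subset -> (forall X, C X -> closed X) ->
  (forall X, C X -> (dist_pt b X <= r%:E)%E) ->
  exists a, (forall X, C X -> X a) /\ `|b - a| <= r.
Proof.
move=> r0 [X0 CX0] tot cl hd.
pose D := [set i : set V * R | C i.1 /\ 0 < i.2].
pose B := fun i : set V * R => [set y | i.1 y /\ `|b - y| <= r + i.2].
pose F := filter_from D B.
have FF : ProperFilter F.
  apply: filter_from_proper.
    apply: filter_from_filter; first by exists (X0, 1) => /=.
    move=> [X e1] [Y e2] [/= CX e10] [/= CY e20].
    have [Z [CZ [ZX ZY]]] : exists Z, C Z /\ Z `<=` X /\ Z `<=` Y.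
      have [XY|YX] := tot _ _ CX CY.
        by exists X; split => //; split.
      by exists Y; split => //; split.
    exists (Z, Num.min e1 e2); first by split => //=; rewrite lt_min e10 e20.
    move=> y [/= Zy hy]; split; split => /=; [exact: ZX| |exact: ZY|].
      by apply: le_trans hy _; rewrite lerD2l ge_min lexx.
    by apply: le_trans hy _; rewrite lerD2l ge_min lexx orbT.
  move=> [X e'] [/= CX e0]; have [a [Xa ha]] := dist_leP (hd X CX) e0.
  by exists a; split => //; exact: ltW.
pose K0 := [set y | `|b - y| <= r + 1].
have cK0 : compact K0.
  apply: fd_compact hV _ _ _; first by apply: closed_nball; rewrite ltr_wpDl.
  exists (`|b| + (r + 1)) => y hy.
  have -> : y = b - (b - y) by rewrite opprB addrC subrK.
  by apply: le_trans (ler_normB _ _) _; rewrite lerD2l.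
have FK0 : F K0 by exists (X0, 1) => //; move=> y [_ /= ?].
have [p [K0p clp]] := cK0 F FF FK0.
move: clp; rewrite clusterE => clp.
have pB : forall X e, C X -> 0 < e -> B (X, e) p.
  move=> X e CX e0.
  have cB : closed (B (X, e)).
    by apply: closedI; [exact: cl|apply: closed_nball; rewrite ltr_wpDl].
  rewrite ((closure_id _).1 cB); apply: clp; exact: in_filter_from.
exists p; split.
  by move=> X CX; have [] := pB X 1 CX ltr01.
by apply/ler_addgt0Pr => e e0; case: (pB X0 e CX0 e0).
Qed.

End Chain.

Unset Implicit Arguments. Set Strict Implicit.

Theorem mainTheorem13 (R : realType) (V : normedModType R) (hV : finite_dim V)
  (A0 : set V) (hA0c : closed A0) (hA0n : A0 !=set0)
  (n : nat) (hn : (0 < n)%N) (M : 'I_n -> set V)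
  (hM : forall i, fin_class A0 (M i))
  (hSigma : Sigma A0 M !=set0)
  (d : 'I_n -> \bar R) (hd : Omega A0 M d)
  (K : set V) (hK : Sigma_d A0 M d K) :
  exists K' : set V, Sigma_d A0 M d K' /\ K' `<=` K /\
    (forall K'' : set V, Sigma_d A0 M d K'' -> K'' `<=` K' -> K'' = K').
Proof.
move: (hK) => [[[cK [K0 hKA]] Kmin] dK].
have hKM i : (hausdorff K (M i) < +oo)%E.
  have [cMi [Mi0 hMi]] := hM i.
  have e1 := haus_real K0 hKA; have e2 := haus_real Mi0 hMi.
  have h1 : (hausdorff K A0 <= (fine (hausdorff K A0))%:E)%E by rewrite -e1.
  have h2 : (hausdorff A0 (M i) <= (fine (hausdorff (M i) A0))%:E)%E.
    by rewrite hausC -e2.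
  exact: le_lt_trans (haus_tri h1 h2) (ltry _).
pose r i := fine (d i).
have hr i : d i = (r i)%:E by rewrite /r -dK /dvec -(haus_real K0 (hKM i)).
have hKr i : hausdorff K (M i) = (r i)%:E by rewrite -hr -dK.
have r0 i : 0 <= r i by rewrite -lee_fin -hKr; exact: haus_ge0.
pose i0 := Ordinal hn.
pose P := fun X : set V => Sigma_d A0 M d X /\ X `<=` K.
have chain : forall C : set (set V), C !=set0 -> total_on C subset -> C `<=` P ->
    P (\bigcap_(X in C) X).
  move=> C Cn tot PC; have [X0 CX0] := Cn.
  set I := \bigcap_(X in C) X.
  have CS X : C X -> Sigma_d A0 M d X by move=> h; exact: (PC X h).1.
  have hX X i : C X -> hausdorff X (M i) = (r i)%:E.
    by move=> CX; have [_ dX] := CS X CX; rewrite -hr -dX.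
  have hXle X i : C X -> (hausdorff X (M i) <= (r i)%:E)%E.
    by move=> CX; rewrite hX.
  have cl X : C X -> closed X by move=> CX; exact: (CS X CX).1.1.1.
  have hb i b : M i b -> exists a, I a /\ `|b - a| <= r i.
    move=> Mib; have [a [Ia ba]] := chain_point hV (r0 i) Cn tot cl
      (fun X CX => le_trans (haus_dist2 X Mib) (hXle X i CX)).
    by exists a.
  have I0 : I !=set0.
    have [_ [[b Mb] _]] := hM i0; have [a [Ia _]] := hb i0 b Mb; by exists a.
  have hI i : (hausdorff I (M i) <= (r i)%:E)%E.
    apply: haus_le => [a Ia|b Mb].
      rewrite -(hX X0 i CX0); apply: haus_dist1; exact: Ia X0 CX0.
    have [a [Ia ba]] := hb i b Mb; apply: le_trans (dist_le_pt b Ia) _.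
    by rewrite lee_fin.
  have IK : I `<=` K by move=> x Ix; exact: (PC X0 CX0).2 _ (Ix X0 CX0).
  have Ifin : fin_class A0 I.
    split; first by apply: closed_bigI => X CX; exact: cl.
    split => //.
    have [_ [M0 hM0]] := hM i0.
    have e2 := haus_real M0 hM0.
    have h2 : (hausdorff (M i0) A0 <= (fine (hausdorff (M i0) A0))%:E)%E.
      by rewrite -e2.
    exact: le_lt_trans (haus_tri (hI i0) h2) (ltry _).
  have SI : (S_M M I <= S_M M K)%E.
    rewrite /S_M; apply: lee_sum => i _; rewrite hKr; exact: hI.
  have hIr i : hausdorff I (M i) = (fine (hausdorff I (M i)))%:E.
    exact: haus_real I0 (le_lt_trans (hI i) (ltry _)).
  pose q i := fine (hausdorff I (M i)).
  have qr i : q i <= r i by rewrite -lee_fin -hIr; exact: hI.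
  have sm : \sum_(i < n) r i <= \sum_(i < n) q i.
    have := Kmin I Ifin; rewrite /S_M.
    under eq_bigr do rewrite hKr.
    under [X in (_ <= X)%E]eq_bigr do rewrite hIr.
    by rewrite !sumEFin lee_fin.
  have z : forall i, r i - q i = 0.
    move=> i; apply: (@psumr_eq0P _ _ xpredT (fun j => r j - q j)) => //.
      by move=> j _; rewrite subr_ge0; exact: qr.
    apply/eqP; rewrite eq_le; apply/andP; split.
      by rewrite sumrB subr_le0.
    by apply: sumr_ge0 => j _; rewrite subr_ge0 qr.
  split; last exact: IK.
  split; first split => //.
    by move=> Y hY; apply: le_trans SI _; exact: Kmin Y hY.
  apply/funext => i; rewrite /dvec hIr hr; congr EFin.
  by apply/eqP; rewrite eq_sym -subr_eq0 z.
pose T := {X : set V | P X}.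
pose Rr := fun (s t : T) => `[< sval t `<=` sval s >].
have [t tmax] : exists t, forall s, Rr t s -> s = t.
  apply: Zorn.
  - by move=> ?; apply/asboolP.
  - move=> ? ? ? /asboolP h1 /asboolP h2; apply/asboolP; exact: subset_trans h2 h1.
  - move=> [X pX] [Y pY] /asboolP /= h1 /asboolP /= h2; apply: eq_exist.
    by apply/seteqP; split.
  - move=> Fc Ftot; have [Fn|F0] := pselect (Fc !=set0); last first.
      exists (exist _ K (conj hK (@subset_refl _ K))) => s Fs.
      by exfalso; apply: F0; exists s.
    pose C := [set sval s | s in Fc].
    have PI : P (\bigcap_(X in C) X).
      apply: chain.
      - by have [s Fs] := Fn; exists (sval s), s.
      - move=> _ _ [s Fs <-] [u Fu <-].
        by have [/asboolP h|/asboolP h] := Ftot s u Fs Fu; [right|left].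
      - by move=> _ [s Fs <-]; exact: (svalP s).
    exists (exist _ _ PI) => s Fs; apply/asboolP => /= x Ix; apply: Ix.
    by exists s.
exists (sval t); split; first exact: (svalP t).1.
split; first exact: (svalP t).2.
move=> K'' hK'' sub.
have PK'' : P K'' := conj hK'' (subset_trans sub (svalP t).2).
have := tmax (exist _ K'' PK'') (asboolT sub).
by move=> /(congr1 sval).
Qed.
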